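(* For every integer $d\ge2$: (1) $\mathcal{VC}_{V_d}(V_{[0,1/d)})=\mathcal C_{V_d}(V_{[0,1/d)})=V_{[1/d,1]}$; (2) $\mathcal{VC}_{V_d}(V_{[1/d,1]})=\mathcal C_{V_d}(V_{[1/d,1]})=V_{[0,1/d)}$; (3) $\mathcal{VC}_{T_d}(T_{[0,1/d)})=\mathcal C_{T_d}(T_{[0,1/d)})=T_{[1/d,1]}$; (4) $\mathcal{VC}_{T_d}(T_{[1/d,1]})=\mathcal C_{T_d}(T_{[1/d,1]})=T_{[0,1/d)}$. In particular $(L(V_{[0,1/d)})'\cap L(V_d))'\cap L(V_d)=L(V_{[0,1/d)})$ and $(L(T_{[0,1/d)})'\cap L(T_d))'\cap L(T_d)=L(T_{[0,1/d)})$.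
   Context: $V_d$ is the Higman–Thompson group of piecewise affine bijections of $[0,1)$ with finitely many $d$-adic breakpoints and slopes powers of $d$; $T_d$ its subgroup of elements inducing circle homeomorphisms. $V_{[0,1/d)}$ (resp. $V_{[1/d,1]}$) is the subgroup of $V_d$ of elements acting as the identity on $[0,1/d)$ (resp. on $[1/d,1)$); $T_{[0,1/d)}$, $T_{[1/d,1]}$ are defined likewise in $T_d$. For $H\le G$: $\mathcal C_G(H)=\{g\in G:h^{-1}gh=g\ \forall h\in H\}$ and the virtual centralizer $\mathcal{VC}_G(H)=\{g\in G:\{h^{-1}gh:h\in H\}\text{ is finite}\}$. For $A\subseteq L(G)$, $A'\cap L(G)$ is the relative commutant. *)

(* Defs.v *)
From Stdlib Require Import Reals ZArith List ClassicalEpsilon.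
Open Scope R_scope.

Definition dadic (d : nat) (x : R) : Prop :=
  exists (z : Z) (n : nat), x = IZR z / (INR d ^ n).

Definition inI (x : R) : Prop := 0 <= x < 1.

(* Elements of V_d are represented as functions R -> R that are the identity
   outside [0,1); on [0,1) they are piecewise affine bijections with finitely
   many d-adic breakpoints a_0 = 0 < a_1 < ... < a_n = 1, slopes integer
   powers of d, and mapping d-adic points to d-adic points (d-adic intercepts). *)
Definition Vd (d : nat) (f : R -> R) : Prop :=
  (forall x, ~ inI x -> f x = x) /\
  (forall x, inI x -> inI (f x)) /\
  (forall y, inI y -> exists x, inI x /\ f x = y) /\
  (forall x y, inI x -> inI y -> f x = f y -> x = y) /\
  exists (n : nat) (a : nat -> R),
    a 0%nat = 0 /\ a n = 1 /\
    (forall i, (i < n)%nat -> a i < a (S i) /\ dadic d (a i)) /\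
    (forall i, (i < n)%nat -> exists (k : Z) (b : R), dadic d b /\
        forall x, a i <= x < a (S i) -> f x = powerRZ (INR d) k * x + b).

Definition cdist (x y : R) : R := Rmin (Rabs (x - y)) (1 - Rabs (x - y)).

Definition circle_continuous (f : R -> R) : Prop :=
  forall x, inI x -> forall eps, 0 < eps -> exists delta, 0 < delta /\
    forall y, inI y -> cdist x y < delta -> cdist (f x) (f y) < eps.

Definition induces_circle_homeo (f : R -> R) : Prop :=
  (forall x, inI x -> inI (f x)) /\ circle_continuous f /\
  exists g : R -> R, (forall y, inI y -> inI (g y)) /\
    (forall x, inI x -> g (f x) = x) /\ (forall y, inI y -> f (g y) = y) /\
    circle_continuous g.

Definition Td (d : nat) (f : R -> R) : Prop := Vd d f /\ induces_circle_homeo f.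

Definition fix_left (d : nat) (f : R -> R) : Prop :=
  forall x, 0 <= x < 1 / INR d -> f x = x.
Definition fix_right (d : nat) (f : R -> R) : Prop :=
  forall x, 1 / INR d <= x < 1 -> f x = x.

Definition V_left  (d : nat) f := Vd d f /\ fix_left d f.   (* V_{[0,1/d)} *)
Definition V_right (d : nat) f := Vd d f /\ fix_right d f.  (* V_{[1/d,1]} *)
Definition T_left  (d : nat) f := Td d f /\ fix_left d f.   (* T_{[0,1/d)} *)
Definition T_right (d : nat) f := Td d f /\ fix_right d f.  (* T_{[1/d,1]} *)

(* inverse function (elements of V_d are bijections of R) *)
Definition finv (h : R -> R) (y : R) : R :=
  epsilon (inhabits 0) (fun x => h x = y).

Definition conj (h g : R -> R) : R -> R := fun x => finv h (g (h x)).

Definition finite_set {T : Type} (P : T -> Prop) : Prop :=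
  exists l : list T, forall t, P t -> In t l.

Definition centralizer (G H : (R -> R) -> Prop) (g : R -> R) : Prop :=
  G g /\ forall h, H h -> conj h g = g.

Definition vcentralizer (G H : (R -> R) -> Prop) (g : R -> R) : Prop :=
  G g /\ finite_set (fun k => exists h, H h /\ k = conj h g).

Definition same_set (A B : (R -> R) -> Prop) : Prop := forall g, A g <-> B g.

(* Main.v *)
Require Import Defs.
From Stdlib Require Import Reals Lra Lia Psatz ZArith List ClassicalEpsilon Classical FinFun FunctionalExtensionality.
Open Scope R_scope.

Definition Fm (D u w a : R) (x : R) : R :=
  if Rlt_dec x u then x
  else if Rlt_dec x (u + a) then u + (x - u) / D
  else if Rlt_dec x (w - a / D) then x - a + a / D
  else if Rlt_dec x w then w + D * (x - w)
  else x.
Definition Gm (D u w a : R) (y : R) : R :=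
  if Rlt_dec y u then y
  else if Rlt_dec y (u + a / D) then u + D * (y - u)
  else if Rlt_dec y (w - a) then y + a - a / D
  else if Rlt_dec y w then w + (y - w) / D
  else y.

Definition good (D u w a : R) := 2 <= D /\ 0 < a /\ a + a / D < w - u.

Ltac prep := 
  match goal with H : good ?D _ _ _ |- _ =>
  destruct H as (HD & Ha & Hg);
  unfold Fm, Gm, Rdiv in *;
  assert (He : D * / D = 1) by (field; lra);
  assert (He2 : 0 < / D) by (apply Rinv_0_lt_compat; lra);
  assert (He3 : / D <= 1/2) by (apply Rinv_le_contravar in HD ; lra);
  set (e := / D) in *; clearbody e end.

Lemma GF D u w a x : good D u w a -> Gm D u w a (Fm D u w a x) = x.
Proof. intros H. prep. repeat destruct Rlt_dec; try nra. Qed.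
Lemma FG D u w a x : good D u w a -> Fm D u w a (Gm D u w a x) = x.
Proof. intros H. prep. repeat destruct Rlt_dec; try nra. Qed.
Lemma lipF D u w a x y : good D u w a -> x <= y ->
  0 <= Fm D u w a y - Fm D u w a x <= D * (y - x).
Proof. intros H Hxy. prep. repeat destruct Rlt_dec; split; try nra. Qed.
Lemma lipG D u w a x y : good D u w a -> x <= y ->
  0 <= Gm D u w a y - Gm D u w a x <= D * (y - x).
Proof. intros H Hxy. prep. repeat destruct Rlt_dec; split; try nra. Qed.
Lemma Fm_out D u w a x : good D u w a -> x < u \/ w <= x -> Fm D u w a x = x.
Proof. intros H Hx. prep. repeat destruct Rlt_dec; try nra. Qed.
Lemma Gm_out D u w a x : good D u w a -> x < u \/ w <= x -> Gm D u w a x = x.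
Proof. intros H Hx. prep. repeat destruct Rlt_dec; try nra. Qed.
Lemma Fm_mid D u w a x : good D u w a -> u + a <= x < w - a / D -> Fm D u w a x = x - a + a / D.
Proof. intros H Hx. prep. repeat destruct Rlt_dec; try nra. Qed.
Lemma Gm_mid D u w a x : good D u w a -> u + a / D <= x < w - a -> Gm D u w a x = x + a - a / D.
Proof. intros H Hx. prep. repeat destruct Rlt_dec; try nra. Qed.
Lemma Fm_p1 D u w a x : good D u w a -> u <= x < u + a -> Fm D u w a x = / D * x + (u - u / D).
Proof. intros H Hx. prep. repeat destruct Rlt_dec; try nra. Qed.
Lemma Fm_p3 D u w a x : good D u w a -> w - a / D <= x < w -> Fm D u w a x = D * x + (w - D * w).
Proof. intros H Hx. prep. repeat destruct Rlt_dec; try nra. Qed.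
Lemma good_D D u w a : good D u w a -> 2 <= D.
Proof. intros [? ?]; auto. Qed.
Lemma good_ord D u w a : good D u w a -> u < u + a < w - a / D /\ w - a / D < w.
Proof. intros H. prep. nra. Qed.

Lemma cdist_lip (f : R -> R) K : 1 <= K -> f 0 = 0 -> f 1 = 1 ->
  (forall x y, x <= y -> 0 <= f y - f x <= K * (y - x)) ->
  forall x y, inI x -> inI y -> cdist (f x) (f y) <= K * cdist x y.
Proof.
  intros HK H0 H1 Hl.
  assert (Hw : forall x y, inI x -> inI y -> x <= y -> cdist (f x) (f y) <= K * cdist x y).
  { intros x y Hx Hy Hxy. unfold cdist, inI in *.
    pose proof (Hl x y Hxy) as [A B].
    pose proof (Hl 0 x (proj1 Hx)) as [A0 B0].
    pose proof (Hl y 1 (Rlt_le _ _ (proj2 Hy))) as [A1 B1].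
    rewrite (Rabs_left1 (f x - f y)) by lra.
    rewrite (Rabs_left1 (x - y)) by lra.
    unfold Rmin; repeat destruct Rle_dec; nra. }
  intros x y Hx Hy. destruct (Rle_dec x y) as [h|h]. now apply Hw.
  unfold cdist. rewrite (Rabs_minus_sym (f x)), (Rabs_minus_sym x).
  apply Hw; auto; lra.
Qed.

Lemma circ_lip (f : R -> R) K : 1 <= K -> f 0 = 0 -> f 1 = 1 ->
  (forall x y, x <= y -> 0 <= f y - f x <= K * (y - x)) -> circle_continuous f.
Proof.
  intros HK H0 H1 Hl x Hx eps Heps. exists (eps / K). split.
  apply Rdiv_lt_0_compat; lra.
  intros y Hy Hd. eapply Rle_lt_trans. apply (cdist_lip f K); auto.
  apply (Rmult_lt_compat_l K) in Hd; [|lra].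
  replace (K * (eps / K)) with eps in Hd by (field; lra). exact Hd.
Qed.

Lemma INRd_ge2 d : (2 <= d)%nat -> 2 <= INR d.
Proof. intros h. apply le_INR in h. simpl in h. lra. Qed.

Lemma Dpow_IZR d n : INR d ^ n = IZR (Z.of_nat d ^ Z.of_nat n).
Proof. rewrite INR_IZR_INZ, pow_IZR. reflexivity. Qed.

Lemma Dpow_pos d n : (2 <= d)%nat -> 0 < INR d ^ n.
Proof. intros h. apply pow_lt. pose proof (INRd_ge2 d h). lra. Qed.

Lemma dadic_int d z : dadic d (IZR z).
Proof. exists z, 0%nat. simpl. field. Qed.

Lemma dadic_add d x y : (2 <= d)%nat -> dadic d x -> dadic d y -> dadic d (x + y).
Proof.
  intros h [z1 [n1 ->]] [z2 [n2 ->]].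
  exists (z1 * (Z.of_nat d ^ Z.of_nat n2) + z2 * (Z.of_nat d ^ Z.of_nat n1))%Z, (n1 + n2)%nat.
  rewrite plus_IZR, !mult_IZR, <- !Dpow_IZR, pow_add.
  pose proof (Dpow_pos d n1 h). pose proof (Dpow_pos d n2 h).
  field. split; lra.
Qed.

Lemma dadic_opp d x : dadic d x -> dadic d (- x).
Proof. intros [z [n ->]]. exists (- z)%Z, n. rewrite opp_IZR. unfold Rdiv. ring. Qed.

Lemma dadic_sub d x y : (2 <= d)%nat -> dadic d x -> dadic d y -> dadic d (x - y).
Proof. intros h a b. apply dadic_add; auto. apply dadic_opp; auto. Qed.

Lemma dadic_divD d x : (2 <= d)%nat -> dadic d x -> dadic d (x / INR d).
Proof.
  intros h [z [n ->]]. exists z, (S n). pose proof (Dpow_pos d n h).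
  pose proof (INRd_ge2 d h). simpl. field. split; lra.
Qed.

Lemma dadic_mulD d x : (2 <= d)%nat -> dadic d x -> dadic d (INR d * x).
Proof.
  intros h [z [n ->]]. exists (Z.of_nat d * z)%Z, n. rewrite mult_IZR, <- INR_IZR_INZ.
  unfold Rdiv. ring.
Qed.

Lemma dadic_invD d x : (2 <= d)%nat -> dadic d x -> dadic d (/ INR d * x).
Proof. intros h a. replace (/ INR d * x) with (x / INR d) by (unfold Rdiv; ring).
  now apply dadic_divD. Qed.

Definition bp (D u w a : R) (i : nat) : R :=
  match i with 0%nat => 0 | 1%nat => u | 2%nat => u + a | 3%nat => w - a / D | 4%nat => w | _ => 1 end.

Lemma Fm_inI D u w a x : good D u w a -> 0 < u -> w < 1 -> inI x -> inI (Fm D u w a x).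
Proof.
  intros H Hu Hw [h0 h1].
  pose proof (lipF D u w a 0 x H h0). pose proof (lipF D u w a x 1 H (Rlt_le _ _ h1)).
  rewrite (Fm_out D u w a 0) in * by (auto; lra).
  rewrite (Fm_out D u w a 1) in * by (auto; lra).
  split. lra. destruct (Req_dec (Fm D u w a x) 1) as [E|E]; [|lra].
  exfalso. pose proof (GF D u w a x H). rewrite E in H2.
  rewrite Gm_out in H2 by (auto; lra). lra.
Qed.

Lemma Gm_inI D u w a x : good D u w a -> 0 < u -> w < 1 -> inI x -> inI (Gm D u w a x).
Proof.
  intros H Hu Hw [h0 h1].
  pose proof (lipG D u w a 0 x H h0). pose proof (lipG D u w a x 1 H (Rlt_le _ _ h1)).
  rewrite (Gm_out D u w a 0) in * by (auto; lra).
  rewrite (Gm_out D u w a 1) in * by (auto; lra).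
  split. lra. destruct (Req_dec (Gm D u w a x) 1) as [E|E]; [|lra].
  exfalso. pose proof (FG D u w a x H). rewrite E in H2.
  rewrite Fm_out in H2 by (auto; lra). lra.
Qed.

Lemma Fm_Vd d u w a : (2 <= d)%nat -> good (INR d) u w a -> 0 < u -> w < 1 ->
  dadic d u -> dadic d w -> dadic d a -> Vd d (Fm (INR d) u w a).
Proof.
  intros hd H Hu Hw du dw da. pose proof (INRd_ge2 d hd) as HD.
  pose proof (good_ord _ _ _ _ H) as Ho.
  split; [|split; [|split; [|split]]].
  - intros x Hx. apply Fm_out; auto. unfold inI in Hx. lra.
  - intros x Hx. apply Fm_inI; auto.
  - intros y Hy. exists (Gm (INR d) u w a y). split. apply Gm_inI; auto. apply FG; auto.
  - intros x y _ _ E. rewrite <- (GF _ _ _ _ x H), <- (GF _ _ _ _ y H), E. reflexivity.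
  - exists 5%nat, (bp (INR d) u w a). split; [reflexivity|split; [reflexivity|split]].
    + intros i hi. destruct i as [|[|[|[|[|i]]]]]; try lia; simpl; split; try lra.
      * apply (dadic_int d 0).
      * auto.
      * apply dadic_add; auto.
      * apply dadic_sub; auto. apply dadic_divD; auto.
      * auto.
    + intros i hi. destruct i as [|[|[|[|[|i]]]]]; try lia; simpl.
      * exists 0%Z, 0. split. apply (dadic_int d 0). intros x hx.
        rewrite Fm_out by (auto; lra). simpl. ring.
      * exists (-1)%Z, (u - u / INR d). split.
        apply dadic_sub; auto; apply dadic_divD; auto.
        intros x hx. rewrite Fm_p1 by auto. simpl. field. lra.
      * exists 0%Z, (a / INR d - a). split.
        apply dadic_sub; auto; apply dadic_divD; auto.
        intros x hx. rewrite Fm_mid by auto. simpl. ring.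
      * exists 1%Z, (w - INR d * w). split.
        apply dadic_sub; auto; apply dadic_mulD; auto.
        intros x hx. rewrite Fm_p3 by auto. simpl. ring.
      * exists 0%Z, 0. split. apply (dadic_int d 0). intros x hx.
        rewrite Fm_out by (auto; lra). simpl. ring.
Qed.

Lemma Fm_Td d u w a : (2 <= d)%nat -> good (INR d) u w a -> 0 < u -> w < 1 ->
  dadic d u -> dadic d w -> dadic d a -> Td d (Fm (INR d) u w a).
Proof.
  intros hd H Hu Hw du dw da. pose proof (INRd_ge2 d hd) as HD.
  split. apply Fm_Vd; auto.
  split; [|split; [|exists (Gm (INR d) u w a); split; [|split; [|split]]]].
  - intros x Hx. apply Fm_inI; auto.
  - apply (circ_lip _ (INR d)). lra. apply Fm_out; auto; lra. apply Fm_out; auto; lra.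
    intros; apply lipF; auto.
  - intros x Hx. apply Gm_inI; auto.
  - intros x _. apply GF; auto.
  - intros x _. apply FG; auto.
  - apply (circ_lip _ (INR d)). lra. apply Gm_out; auto; lra. apply Gm_out; auto; lra.
    intros; apply lipG; auto.
Qed.

Lemma finv_Fm D u w a y : good D u w a -> finv (Fm D u w a) y = Gm D u w a y.
Proof.
  intros H. unfold finv.
  assert (E : Fm D u w a (epsilon (inhabits 0) (fun x => Fm D u w a x = y)) = y).
  { apply epsilon_spec. exists (Gm D u w a y). apply FG; auto. }
  set (t := epsilon _ _) in *. rewrite <- (GF D u w a t H). rewrite E. reflexivity.
Qed.

Lemma conj_Fm D u w a g x : good D u w a -> conj (Fm D u w a) g x = Gm D u w a (g (Fm D u w a x)).
Proof. intros H. unfold conj. apply finv_Fm; auto. Qed.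

Lemma Vd_inj d g a b : Vd d g -> g a = g b -> a = b.
Proof.
  intros (Hout & Hin & _ & Hinj & _) E.
  destruct (classic (inI a)) as [ha|ha]; destruct (classic (inI b)) as [hb|hb].
  - apply Hinj; auto.
  - rewrite (Hout b hb) in E. exfalso. apply hb. rewrite <- E. auto.
  - rewrite (Hout a ha) in E. exfalso. apply ha. rewrite E. auto.
  - rewrite (Hout a ha), (Hout b hb) in E. auto.
Qed.

Lemma no_inf (P : (R -> R) -> Prop) (k : nat -> R -> R) :
  finite_set P -> (forall n, P (k n)) -> (forall n m, k n = k m -> n = m) -> False.
Proof.
  intros [l Hl] HP Hk.
  assert (ND : NoDup (map k (seq 0 (S (length l))))).
  { apply Injective_map_NoDup. intros x y; apply Hk. apply seq_NoDup. }
  assert (I : incl (map k (seq 0 (S (length l)))) l).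
  { intros t Ht. apply in_map_iff in Ht. destruct Ht as [n [<- _]]. apply Hl, HP. }
  pose proof (NoDup_incl_length ND I). rewrite length_map, length_seq in H. lia.
Qed.

Lemma small_pow d : (2 <= d)%nat -> forall eps, 0 < eps -> exists N, forall n, (n >= N)%nat -> / INR d ^ n < eps.
Proof.
  intros hd eps He. pose proof (INRd_ge2 d hd).
  destruct (pow_lt_1_zero (/ INR d)) with (y := eps) as [N HN]; auto.
  rewrite Rabs_right. rewrite <- Rinv_1. apply Rinv_lt_contravar; lra. left; apply Rinv_0_lt_compat; lra.
  exists N. intros n hn. specialize (HN n hn). rewrite pow_inv in HN.
  rewrite Rabs_right in HN; auto. left. apply Rinv_0_lt_compat, Dpow_pos; auto.
Qed.

Lemma dense d : (2 <= d)%nat -> forall a b, a < b -> exists c, dadic d c /\ a < c < b.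
Proof.
  intros hd a b Hab. destruct (small_pow d hd (b - a)) as [n Hn]. lra.
  specialize (Hn n (le_n _)). pose proof (Dpow_pos d n hd).
  set (P := INR d ^ n) in *. destruct (archimed (a * P)) as [A1 A2].
  exists (IZR (up (a * P)) / P). split. exists (up (a * P)), n. reflexivity.
  assert (HPi : P * / P = 1) by (field; lra).
  assert (0 < / P) by (apply Rinv_0_lt_compat; lra).
  unfold Rdiv. set (U := IZR (up (a * P))) in *.
  assert (E : U * / P - a = (U - a * P) * / P) by (field; lra). split; nra.
Qed.

Lemma interval_find (a : nat -> R) n x : a 0%nat = 0 -> a n = 1 ->
  (forall i, (i < n)%nat -> a i < a (S i)) -> 0 <= x < 1 ->
  exists i, (i < n)%nat /\ a i <= x < a (S i).
Proof.
  intros H0 H1 Hi Hx.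
  assert (forall m, (m <= n)%nat -> a m <= x \/ exists i, (i < m)%nat /\ a i <= x < a (S i)).
  { induction m; intros hm. left; lra.
    destruct IHm as [h|[i [h1 h2]]]; [lia| |].
    - destruct (Rlt_dec x (a (S m))). right. exists m; split; [lia|lra]. left; lra.
    - right. exists i; split; [lia|auto]. }
  destruct (H n (le_n _)) as [h|h]; auto. lra.
Qed.

Lemma right_affine d g x : Vd d g -> inI x -> exists eps k b, 0 < eps /\
  forall z, x <= z < x + eps -> g z = powerRZ (INR d) k * z + b.
Proof.
  intros (_ & _ & _ & _ & n & a & H0 & H1 & Hi & Hp) Hx.
  destruct (interval_find a n x H0 H1) as [i [hi hx]]; auto.
  intros j hj; apply Hi; auto.
  destruct (Hp i hi) as [k [b [_ Hb]]].
  exists (a (S i) - x), k, b. split. lra. intros z hz. apply Hb. lra.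
Qed.

Lemma fix_closed d g p q : Vd d g -> 0 <= p < q -> q <= 1 ->
  (forall x, p < x < q -> g x = x) -> forall x, p <= x < q -> g x = x.
Proof.
  intros Hg Hpq Hq Hf x Hx. destruct (Req_dec x p) as [->|hne]; [|apply Hf; lra].
  destruct (right_affine d g p Hg) as [eps [k [b [He Hb]]]]. unfold inI; lra.
  set (e' := Rmin eps (q - p)).
  assert (0 < e') by (apply Rmin_pos; lra).
  assert (e' <= eps) by apply Rmin_l. assert (e' <= q - p) by apply Rmin_r.
  set (s := powerRZ (INR d) k) in *.
  pose proof (Hb (p + e'/2) ltac:(lra)). pose proof (Hb (p + e'/4) ltac:(lra)).
  rewrite Hf in H2 by lra. rewrite Hf in H3 by lra.
  assert (s = 1) by nra. rewrite Hb by lra. nra.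
Qed.

Lemma aD_lt D a : 2 <= D -> 0 < a -> 0 < a / D < a.
Proof.
  intros HD Ha. split. apply Rdiv_lt_0_compat; lra.
  apply (Rmult_lt_reg_r D); [lra|]. unfold Rdiv. rewrite Rmult_assoc, Rinv_l by lra. nra.
Qed.

Lemma small_good D u w a : 2 <= D -> 0 < a -> a < (w - u) / 2 -> good D u w a.
Proof. intros HD Ha H. pose proof (aD_lt D a HD Ha). split; [lra|split; lra]. Qed.

Lemma fam_contra d (hd : (2 <= d)%nat) (H : (R -> R) -> Prop) g u w eps :
  finite_set (fun k => exists h, H h /\ k = conj h g) -> 0 < eps ->
  (forall a, dadic d a -> 0 < a < eps -> H (Fm (INR d) u w a)) ->
  (forall a b, 0 < a < eps -> 0 < b < eps ->
     conj (Fm (INR d) u w a) g = conj (Fm (INR d) u w b) g ->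
     a - a / INR d = b - b / INR d) -> False.
Proof.
  intros Hfin He HH Hd. pose proof (INRd_ge2 d hd) as HD.
  destruct (small_pow d hd eps He) as [N HN].
  set (al := fun n => / INR d ^ (N + n)).
  assert (Hal : forall n, 0 < al n < eps).
  { intros n. split. apply Rinv_0_lt_compat, Dpow_pos; auto. apply HN. lia. }
  apply (no_inf _ (fun n => conj (Fm (INR d) u w (al n)) g) Hfin).
  - intros n. exists (Fm (INR d) u w (al n)). split; auto. apply HH; auto.
    exists 1%Z, (N + n)%nat. unfold al, Rdiv. ring.
  - intros n m E. apply Hd in E; auto.
    assert (E2 : al n = al m).
    { assert (E3 : al n * (1 - / INR d) = al m * (1 - / INR d)) by (unfold Rdiv in E; lra).
      apply Rmult_eq_reg_r in E3; auto.
      assert (/ INR d < 1). rewrite <- Rinv_1. apply Rinv_lt_contravar; lra. lra. }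
    unfold al in E2. apply Rinv_eq_reg in E2.
    destruct (Nat.lt_total n m) as [h|[h|h]]; auto; exfalso.
    + assert (INR d ^ (N + n) < INR d ^ (N + m)) by (apply Rlt_pow; [lra|lia]). lra.
    + assert (INR d ^ (N + m) < INR d ^ (N + n)) by (apply Rlt_pow; [lra|lia]). lra.
Qed.

Lemma conj_inj D u w a g x y : good D u w a -> (forall a b, g a = g b -> a = b) ->
  conj (Fm D u w a) g x = conj (Fm D u w a) g y -> x = y.
Proof.
  intros H Hg E. rewrite !conj_Fm in E by auto.
  apply (f_equal (Fm D u w a)) in E. rewrite !FG in E by auto.
  apply Hg in E. apply (f_equal (Gm D u w a)) in E. rewrite !GF in E by auto. auto.
Qed.

Lemma core d (hd : (2 <= d)%nat) (H : (R -> R) -> Prop) p q g :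
  0 <= p < q -> q <= 1 ->
  (forall u w a, dadic d u -> dadic d w -> dadic d a -> p <= u -> w <= q -> 0 < u -> w < 1 ->
     good (INR d) u w a -> H (Fm (INR d) u w a)) ->
  Vd d g -> finite_set (fun k => exists h, H h /\ k = conj h g) ->
  forall x0, p < x0 < q -> g x0 = x0.
Proof.
  intros Hpq Hq HF Hg Hfin x0 Hx0. pose proof (INRd_ge2 d hd) as HD.
  destruct (Req_dec (g x0) x0) as [E|Ne]; auto. exfalso.
  set (y0 := g x0) in *.
  assert (Ginj : forall a b, g a = g b -> a = b) by (intros; eapply Vd_inj; eauto).
  destruct (classic (p < y0 < q)) as [Hy|Hy].
  - destruct (Rlt_dec x0 y0) as [Hlt|Hge].
    + destruct (dense d hd x0 y0 Hlt) as [c [dc hc]].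
      destruct (dense d hd y0 q) as [w [dw hw]]. lra.
      set (eps := Rmin (Rmin ((w - c) / 2) (y0 - c)) (w - y0)).
      assert (He : 0 < eps) by (repeat apply Rmin_pos; lra).
      assert (He1 : eps <= (w - c) / 2) by (eapply Rle_trans; [apply Rmin_l|apply Rmin_l]).
      assert (He2 : eps <= y0 - c) by (eapply Rle_trans; [apply Rmin_l|apply Rmin_r]).
      assert (He3 : eps <= w - y0) by apply Rmin_r.
      apply (fam_contra d hd H g c w eps Hfin He).
      * intros a da ha. apply HF; auto; try lra. apply small_good; lra.
      * intros a b ha hb E.
        assert (Ga : good (INR d) c w a) by (apply small_good; lra).
        assert (Gb : good (INR d) c w b) by (apply small_good; lra).
        pose proof (aD_lt _ a HD (proj1 ha)). pose proof (aD_lt _ b HD (proj1 hb)).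
        apply (f_equal (fun k => k x0)) in E. rewrite !conj_Fm in E by auto.
        rewrite !(Fm_out _ c w) in E by (auto; lra). fold y0 in E.
        rewrite !Gm_mid in E by (auto; lra). lra.
    + destruct (dense d hd p y0) as [u [du hu]]. lra.
      destruct (dense d hd y0 x0) as [c [dc hc]]. destruct (Req_dec y0 x0); [congruence|lra].
      set (eps := Rmin (Rmin ((c - u) / 2) (y0 - u)) (c - y0)).
      assert (He : 0 < eps) by (repeat apply Rmin_pos; lra).
      assert (He1 : eps <= (c - u) / 2) by (eapply Rle_trans; [apply Rmin_l|apply Rmin_l]).
      assert (He2 : eps <= y0 - u) by (eapply Rle_trans; [apply Rmin_l|apply Rmin_r]).
      assert (He3 : eps <= c - y0) by apply Rmin_r.
      apply (fam_contra d hd H g u c eps Hfin He).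
      * intros a da ha. apply HF; auto; try lra. apply small_good; lra.
      * intros a b ha hb E.
        assert (Ga : good (INR d) u c a) by (apply small_good; lra).
        assert (Gb : good (INR d) u c b) by (apply small_good; lra).
        pose proof (aD_lt _ a HD (proj1 ha)). pose proof (aD_lt _ b HD (proj1 hb)).
        apply (f_equal (fun k => k x0)) in E. rewrite !conj_Fm in E by auto.
        rewrite !(Fm_out _ u c) in E by (auto; lra). fold y0 in E.
        rewrite !Gm_mid in E by (auto; lra). lra.
  - destruct (dense d hd p x0) as [u [du hu]]. lra.
    destruct (dense d hd x0 q) as [w [dw hw]]. lra.
    set (eps := Rmin (Rmin ((w - u) / 2) (x0 - u)) (w - x0)).
    assert (He : 0 < eps) by (repeat apply Rmin_pos; lra).
    assert (He1 : eps <= (w - u) / 2) by (eapply Rle_trans; [apply Rmin_l|apply Rmin_l]).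
    assert (He2 : eps <= x0 - u) by (eapply Rle_trans; [apply Rmin_l|apply Rmin_r]).
    assert (He3 : eps <= w - x0) by apply Rmin_r.
    apply (fam_contra d hd H g u w eps Hfin He).
    + intros a da ha. apply HF; auto; try lra. apply small_good; lra.
    + intros a b ha hb E.
      assert (Ga : good (INR d) u w a) by (apply small_good; lra).
      assert (Gb : good (INR d) u w b) by (apply small_good; lra).
      pose proof (aD_lt _ a HD (proj1 ha)). pose proof (aD_lt _ b HD (proj1 hb)).
      assert (Ka : conj (Fm (INR d) u w a) g (x0 + a - a / INR d) = y0).
      { rewrite conj_Fm by auto. rewrite Fm_mid by (auto; lra). 
        replace (x0 + a - a / INR d - a + a / INR d) with x0 by ring. fold y0.
        apply Gm_out; auto. lra. }
      assert (Kb : conj (Fm (INR d) u w b) g (x0 + b - b / INR d) = y0).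
      { rewrite conj_Fm by auto. rewrite Fm_mid by (auto; lra). 
        replace (x0 + b - b / INR d - b + b / INR d) with x0 by ring. fold y0.
        apply Gm_out; auto. lra. }
      rewrite <- E in Kb. rewrite <- Ka in Kb.
      apply conj_inj in Kb; auto. lra.
Qed.

Lemma finv_inv d h z : Vd d h -> finv h (h z) = z.
Proof.
  intros Hh. unfold finv. apply (Vd_inj d h); auto.
  apply (epsilon_spec (inhabits 0) (fun x => h x = h z)). exists z; auto.
Qed.

Lemma conj_comm d h g : Vd d h -> (forall x, h (g x) = g (h x)) -> conj h g = g.
Proof.
  intros Hh Hc. apply functional_extensionality. intros x. unfold conj.
  rewrite <- Hc. apply (finv_inv d); auto.
Qed.

Lemma comm d g h : (2 <= d)%nat -> Vd d g -> Vd d h -> fix_right d g -> fix_left d h ->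
  forall x, h (g x) = g (h x).
Proof.
  intros hd Hg Hh Fg Fh x.
  pose proof Hg as (Og & Ig & _). pose proof Hh as (Oh & Ih & _).
  unfold fix_right, fix_left, inI in *.
  destruct (classic (0 <= x < 1)) as [Hx|Hx].
  - destruct (Rlt_dec x (1 / INR d)) as [h1|h1].
    + rewrite (Fh x) by lra. apply Fh. pose proof (Ig x Hx).
      destruct (Rlt_dec (g x) (1 / INR d)); [lra|exfalso].
      assert (g (g x) = g x) by (apply Fg; lra).
      apply (Vd_inj d g) in H0; auto. lra.
    + rewrite (Fg x) by lra. symmetry. apply Fg. pose proof (Ih x Hx).
      destruct (Rlt_dec (h x) (1 / INR d)); [exfalso|lra].
      assert (h (h x) = h x) by (apply Fh; lra).
      apply (Vd_inj d h) in H0; auto. lra.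
  - rewrite (Og x Hx), (Oh x Hx), (Og x Hx). reflexivity.
Qed.

Lemma block d (hd : (2 <= d)%nat) (G H K : (R -> R) -> Prop) p q :
  0 <= p < q -> q <= 1 ->
  (forall g, G g -> Vd d g) ->
  (forall u w a, dadic d u -> dadic d w -> dadic d a -> p <= u -> w <= q -> 0 < u -> w < 1 ->
     good (INR d) u w a -> H (Fm (INR d) u w a)) ->
  (forall g, K g <-> G g /\ forall x, p <= x < q -> g x = x) ->
  (forall g h, K g -> H h -> conj h g = g) ->
  same_set (vcentralizer G H) (centralizer G H) /\ same_set (centralizer G H) K.
Proof.
  intros Hpq Hq GV HF HK Hc.
  assert (A : forall g, vcentralizer G H g -> K g).
  { intros g [Gg Hfin]. apply HK. split; auto.
    apply (fix_closed d g p q (GV g Gg) Hpq Hq).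
    apply (core d hd H p q g Hpq Hq HF (GV g Gg) Hfin). }
  assert (B : forall g, centralizer G H g -> vcentralizer G H g).
  { intros g [Gg Hg]. split; auto. exists (g :: nil). intros t [h [Hh ->]].
    rewrite Hg; auto. left; auto. }
  assert (C : forall g, K g -> centralizer G H g).
  { intros g Kg. split. apply HK; auto. intros h Hh. apply Hc; auto. }
  split; intros g; split; auto.
Qed.

Lemma invD_pos d : (2 <= d)%nat -> 0 < 1 / INR d < 1.
Proof.
  intros hd. pose proof (INRd_ge2 d hd). split. apply Rdiv_lt_0_compat; lra.
  apply (Rmult_lt_reg_r (INR d)); [lra|]. unfold Rdiv. rewrite Rmult_assoc, Rinv_l by lra. lra.
Qed.

Theorem lemma5p9 (d : nat) (hd : (2 <= d)%nat) :
  (same_set (vcentralizer (Vd d) (V_left d)) (centralizer (Vd d) (V_left d)) /\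
   same_set (centralizer (Vd d) (V_left d)) (V_right d)) /\
  (same_set (vcentralizer (Vd d) (V_right d)) (centralizer (Vd d) (V_right d)) /\
   same_set (centralizer (Vd d) (V_right d)) (V_left d)) /\
  (same_set (vcentralizer (Td d) (T_left d)) (centralizer (Td d) (T_left d)) /\
   same_set (centralizer (Td d) (T_left d)) (T_right d)) /\
  (same_set (vcentralizer (Td d) (T_right d)) (centralizer (Td d) (T_right d)) /\
   same_set (centralizer (Td d) (T_right d)) (T_left d)).
Proof.
  pose proof (invD_pos d hd) as Hi.
  split; [|split; [|split]].
  - apply (block d hd _ _ _ (1 / INR d) 1); try lra; auto.
    + intros u w a du dw da hu hw u0 w1 G. split. apply Fm_Vd; auto.
      intros x hx. apply Fm_out; auto. lra.
    + intros g; split; intros [A B]; split; auto.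
    + intros g h [Vg Fg] [Vh Fh]. apply (conj_comm d); auto.
      apply (comm d); auto.
  - apply (block d hd _ _ _ 0 (1 / INR d)); try lra; auto.
    + intros u w a du dw da hu hw u0 w1 G. split. apply Fm_Vd; auto.
      intros x hx. apply Fm_out; auto. lra.
    + intros g; split; intros [A B]; split; auto.
    + intros g h [Vg Fg] [Vh Fh]. apply (conj_comm d); auto.
      intros x. symmetry. apply (comm d); auto.
  - apply (block d hd _ _ _ (1 / INR d) 1); try lra; auto.
    + intros g [A _]; auto.
    + intros u w a du dw da hu hw u0 w1 G. split. apply Fm_Td; auto.
      intros x hx. apply Fm_out; auto. lra.
    + intros g; split; intros [A B]; split; auto.
    + intros g h [[Vg _] Fg] [[Vh _] Fh]. apply (conj_comm d); auto.
      apply (comm d); auto.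
  - apply (block d hd _ _ _ 0 (1 / INR d)); try lra; auto.
    + intros g [A _]; auto.
    + intros u w a du dw da hu hw u0 w1 G. split. apply Fm_Td; auto.
      intros x hx. apply Fm_out; auto. lra.
    + intros g; split; intros [A B]; split; auto.
    + intros g h [[Vg _] Fg] [[Vh _] Fh]. apply (conj_comm d); auto.
      intros x. symmetry. apply (comm d); auto.
Qed.
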